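(* Let $p$ be an odd prime, $t,l\ge1$ odd integers, $0\le a\le b$ integers, $r=p^a(p-1)+l$, $s=p^b(p-1)+l$. Fix $k$ with $0\le k\le\lfloor t/2\rfloor$ and let $x=v_p\!\left(\binom t{2k}\frac{(2k)!}{k!(-24)^k}\right)$. Then for every $n\ge0$, $$(1-p^r)\binom t{2k}\frac{n!\,S_r^{(n+1)}(2k)!}{k!(-24)^k}\equiv(1-p^s)\binom t{2k}\frac{n!\,S_s^{(n+1)}(2k)!}{k!(-24)^k}\pmod{p^{a+x+1}},$$ meaning the difference of the two rational numbers has $p$-adic valuation at least $a+x+1$.
   Context: $S_r^{(n+1)}=\frac1{n!}\sum_{j=0}^{n}\binom nj(-1)^{n+j}(j+1)^{r-1}$. $v_p$ is the $p$-adic valuation on $\mathbb Q$. *)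

(* Defs.v *)
From mathcomp Require Import all_boot all_order all_algebra.
Set Implicit Arguments. Unset Strict Implicit. Unset Printing Implicit Defensive.
Import Order.TTheory GRing.Theory Num.Theory.
Local Open Scope ring_scope.

(* S_r^{(n+1)} = 1/n! * sum_{j=0}^n C(n,j) (-1)^(n+j) (j+1)^(r-1), as a rational.
   [S r n] denotes S_r^{(n+1)}. *)
Definition S (r n : nat) : rat :=
  (n`!%:R)^-1 * \sum_(j < n.+1)
     ('C(n, j)%:R * (-1) ^+ (n + j) * (j.+1)%:R ^+ (r.-1)).

(* p-adic valuation of a nonzero rational number (value 0 at q = 0, never used
   there: see [vp_ge]). *)
Definition vp (p : nat) (q : rat) : int :=
  (logn p `|numq q|%N)%:Z - (logn p `|denq q|%N)%:Z.

(* v_p(q) >= m, with the convention v_p(0) = +oo. *)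
Definition vp_ge (p : nat) (m : int) (q : rat) : bool :=
  (q == 0) || (m <= vp p q).

(* Main.v *)
Require Import Defs.
From mathcomp Require Import all_boot all_order all_algebra.
From mathcomp Require Import cyclic.
From mathcomp Require Import zify ring.
Import Order.TTheory GRing.Theory Num.Theory.
Local Open Scope ring_scope.

Lemma cong (p a b l m : nat) : prime p -> (2 < p)%N -> (a <= b)%N -> (0 < l)%N ->
  (m ^ (p ^ a * (p - 1) + l).-1 = m ^ (p ^ b * (p - 1) + l).-1 %[mod p ^ a.+1])%N.
Proof.
move=> pp p2 ab; case: l => // e _; rewrite !addnS /=.
have tot : totient (p ^ a.+1) = (p ^ a * (p - 1))%N.
  by rewrite totient_pfactor // mulnC subn1.
have ha : (a < p ^ a)%N by apply: ltn_expl; lia.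
have hb : (b < p ^ b)%N by apply: ltn_expl; lia.
have hpa : (p ^ a <= p ^ a * (p - 1))%N by rewrite leq_pmulr //; lia.
have hpb : (p ^ b <= p ^ b * (p - 1))%N by rewrite leq_pmulr //; lia.
case: (boolP (coprime m p)) => cop.
  have cop' : coprime m (p ^ a.+1) by rewrite coprimeXr.
  have E := Euler_exp_totient cop'. rewrite tot in E.
  have -> : (p ^ b * (p - 1) = p ^ a * (p - 1) * p ^ (b - a))%N.
    by rewrite mulnAC -expnD subnKC.
  rewrite !expnD [in RHS]expnM.
  have L1 : (m ^ (p ^ a * (p - 1)) * m ^ e = m ^ e %[mod p ^ a.+1])%N.
    by rewrite -modnMml E modnMml mul1n.
  have L2 : ((m ^ (p ^ a * (p - 1))) ^ (p ^ (b - a)) * m ^ e = m ^ e %[mod p ^ a.+1])%N.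
    by rewrite -modnMml -modnXm E modnXm exp1n modnMml mul1n.
  by rewrite L1 L2.
have pm : (p %| m)%N by move: cop; rewrite coprime_sym prime_coprime // negbK.
have D : forall x, (a.+1 <= x)%N -> (p ^ a.+1 %| m ^ x)%N.
  move=> x hx; apply: dvdn_trans (dvdn_exp2r a.+1 pm) _.
  by apply: dvdn_exp2l.
rewrite (eqP (D _ _)); last by lia.
by rewrite (eqP (D _ _)) //; lia.
Qed.

Definition T (r n : nat) : int :=
  \sum_(j < n.+1) ('C(n, j)%:Z * (-1) ^+ (n + j) * (j.+1 ^ r.-1)%N%:Z).

Lemma ST r n : n`!%:R * S r n = (T r n)%:~R :> rat.
Proof.
rewrite /S mulrA mulfV ?mul1r; last by rewrite pnatr_eq0 -lt0n fact_gt0.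
rewrite /T rmorph_sum; apply: eq_bigr => j _.
rewrite !rmorphM /= rmorphXn /= rmorphN1 ; by congr (_ * _); rewrite -!pmulrn natrX.
Qed.

Lemma Tdiv (p a b l n : nat) : prime p -> (2 < p)%N -> (a <= b)%N -> (0 < l)%N ->
  ((p ^ a.+1)%N%:Z %| T (p ^ a * (p - 1) + l) n - T (p ^ b * (p - 1) + l) n)%Z.
Proof.
move=> pp p2 ab l0; rewrite /T -sumrB; apply: rpred_sum => j _.
rewrite -mulrBr; apply: dvdz_mull.
rewrite -eqz_mod_dvd !modz_nat; apply/eqP; congr Posz; exact: cong.
Qed.

Lemma vp_frac p (x y : int) : x != 0 -> y != 0 ->
  vp p (x%:~R / y%:~R) = (logn p `|x|%N)%:Z - (logn p `|y|%N)%:Z.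
Proof.
move=> x0 y0; set q := x%:~R / y%:~R.
have q0 : q != 0 by rewrite mulf_eq0 invr_eq0 !intr_eq0 negb_or x0 y0.
have e : numq q * y = x * denq q.
  apply: (@intr_inj rat); rewrite !intrM.
  have dq : (denq q)%:~R != 0 :> rat by rewrite intr_eq0 denq_neq0.
  have y0' : y%:~R != 0 :> rat by rewrite intr_eq0.
  have E1 : q * y%:~R = x%:~R by rewrite /q divfK.
  have E2 : q * (denq q)%:~R = (numq q)%:~R by rewrite -{1}(divq_num_den q) divfK.
  by rewrite -E1 -E2 mulrAC.
have e' := congr1 (fun z : int => logn p `|z|%N) e; rewrite /= !abszM in e'.
rewrite !lognM ?absz_gt0 ?numq_eq0 ?denq_neq0 // in e'.
rewrite /vp; lia.
Qed.

Lemma vp_mul p c (z : int) m : prime p -> ((p ^ m)%N%:Z %| z)%Z ->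
  vp_ge p (m%:Z + vp p c) (c * z%:~R).
Proof.
move=> pp dz; rewrite /vp_ge.
case: (eqVneq c 0) => [->|c0]; first by rewrite mul0r eqxx.
case: (eqVneq z 0) => [->|z0]; first by rewrite mulr0 eqxx.
apply/orP; right.
have -> : c * z%:~R = (numq c * z)%:~R / (denq c)%:~R.
  by rewrite intrM mulrAC -[c in LHS]divq_num_den.
rewrite vp_frac ?mulf_neq0 ?numq_eq0 ?denq_neq0 //.
rewrite abszM lognM ?absz_gt0 ?numq_eq0 //.
have : (m <= logn p `|z|)%N.
  by rewrite -pfactor_dvdn ?absz_gt0 // -(dvdzE (p ^ m)%N%:Z).
rewrite /vp; lia.
Qed.

Theorem mainTheorem7 (p t l a b k : nat) :
  prime p -> odd p -> (0 < t)%N -> odd t -> (0 < l)%N -> odd l ->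
  (a <= b)%N -> (k <= t./2)%N ->
  let r := (p ^ a * (p - 1) + l)%N in
  let s := (p ^ b * (p - 1) + l)%N in
  let c : rat := 'C(t, 2 * k)%:R * (2 * k)`!%:R / (k`!%:R * (-24) ^+ k) in
  let x := vp p c in
  forall n : nat,
    vp_ge p (a%:Z + x + 1)
      ((1 - p%:R ^+ r) * ('C(t, 2 * k)%:R * (n`!%:R * S r n * (2 * k)`!%:R)
                           / (k`!%:R * (-24) ^+ k))
       - (1 - p%:R ^+ s) * ('C(t, 2 * k)%:R * (n`!%:R * S s n * (2 * k)`!%:R)
                           / (k`!%:R * (-24) ^+ k))).
Proof.
move=> pp op _ _ l0 _ ab _ r s c x n.
have p2 : (2 < p)%N.
  have := prime_gt1 pp; have : p != 2 by apply/eqP => e; rewrite e in op.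
  lia.
set z : int := (1 - (p ^ r)%N%:Z) * T r n - (1 - (p ^ s)%N%:Z) * T s n.
have -> : (1 - p%:R ^+ r) * ('C(t, 2 * k)%:R * (n`!%:R * S r n * (2 * k)`!%:R)
                           / (k`!%:R * (-24) ^+ k))
       - (1 - p%:R ^+ s) * ('C(t, 2 * k)%:R * (n`!%:R * S s n * (2 * k)`!%:R)
                           / (k`!%:R * (-24) ^+ k)) = c * z%:~R.
  rewrite !ST /z /c rmorphB !rmorphM /= !rmorphB /= rmorph1 -!pmulrn !natrX.
  ring.
have -> : a%:Z + x + 1 = a.+1%:Z + x by rewrite /x; lia.
apply: vp_mul => //.
have hr : (a.+1 <= r)%N.
  have := ltn_expl a (prime_gt1 pp).
  have : (p ^ a <= p ^ a * (p - 1))%N by rewrite leq_pmulr //; lia.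
  rewrite /r; lia.
have hs : (a.+1 <= s)%N.
  have := ltn_expl b (prime_gt1 pp).
  have : (p ^ b <= p ^ b * (p - 1))%N by rewrite leq_pmulr //; lia.
  rewrite /s; lia.
have -> : z = (T r n - T s n) - ((p ^ r)%N%:Z * T r n - (p ^ s)%N%:Z * T s n).
  by rewrite /z; ring.
apply: rpredB; first exact: Tdiv.
apply: rpredB; apply: dvdz_mulr; rewrite dvdzE /=; apply: dvdn_exp2l => //.
Qed.
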